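(* Let $R=k[x_1,\dots,x_n]$ be graded by a monoid $P$, let $e_1,\dots,e_m$ be variables of $R$ with $\deg(e_i)=\underline e_i\in P$, let $Q^1,\dots,Q^m$ and $J^1,\dots,J^m$ be $P$-homogeneous ideals with $Q^i\subseteq J^i$, and let $s(t)=\sum_{D\in P}S_Dt^D$ be a power series. Suppose: (1) $HS(J^i,t)=s(t)$ for all $i$; (2) for each $i$, $e_i$ is a nonzerodivisor in $R/Q^i$; (3) all the $Q^i$ have a common Hilbert function; (4) for every $D\in P$ there exist an index $j$ and natural numbers $a_1,\dots,a_m$ such that $\dim_k Q^j_{D+\sum_ia_i\underline e_i}=S_{D+\sum_ia_i\underline e_i}$. Then $Q^i=J^i$ for all $i$.
   Context: $R$ is graded by a monoid $P$ such that every monomial is $P$-homogeneous, the $P$-grading refines the standard grading, and each graded piece is finite dimensional. For a $P$-homogeneous ideal $I$, $I_D$ is its degree-$D$ piece and $HS(I,t)=\sum_{D\in P}\dim_k(I_D)\,t^D$; the Hilbert function of $I$ is $D\mapsto\dim_k I_D$. *)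

(* Defs.v *)
From HB Require Import structures.
From mathcomp Require Import all_boot all_order all_algebra.
From mathcomp Require Export multinomials.mpoly.
Set Implicit Arguments. Unset Strict Implicit. Unset Printing Implicit Defensive.
Import GRing.Theory.
Local Open Scope ring_scope.

(* The P-grading of R = k[x_1..x_n] is given by weights w : 'I_n -> P of the
   variables; a monomial x^m has P-degree sum_i m_i * w_i.  P is a commutative
   monoid, written additively (nmodType). *)
Definition pdeg (P : nmodType) (n : nat) (w : 'I_n -> P) (m : 'X_{1..n}) : P :=
  \sum_(i < n) w i *+ m i.

Definition refines_std (P : nmodType) (n : nat) (w : 'I_n -> P) : Prop :=
  forall m1 m2 : 'X_{1..n}, pdeg w m1 = pdeg w m2 -> mdeg m1 = mdeg m2.

(* f is P-homogeneous of degree D (0 is homogeneous of every degree) *)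
Definition phomog (P : nmodType) (n : nat) (k : fieldType) (w : 'I_n -> P)
    (D : P) (f : {mpoly k[n]}) : bool :=
  all (fun m => pdeg w m == D) (msupp f).

Definition pcomp (P : nmodType) (n : nat) (k : fieldType) (w : 'I_n -> P)
    (D : P) (f : {mpoly k[n]}) : {mpoly k[n]} :=
  \sum_(m <- msupp f | pdeg w m == D) f@_m *: 'X_[m].

Definition is_ideal (n : nat) (k : fieldType) (I : {pred {mpoly k[n]}}) : Prop :=
  [/\ 0 \in I,
      (forall f g, f \in I -> g \in I -> f + g \in I) &
      (forall r f, f \in I -> r * f \in I)].

Definition phomog_ideal (P : nmodType) (n : nat) (k : fieldType)
    (w : 'I_n -> P) (I : {pred {mpoly k[n]}}) : Prop :=
  is_ideal I /\ forall f D, f \in I -> pcomp w D f \in I.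

Definition piece (P : nmodType) (n : nat) (k : fieldType) (w : 'I_n -> P)
    (I : {pred {mpoly k[n]}}) (D : P) : {pred {mpoly k[n]}} :=
  [pred f | (f \in I) && phomog w D f].

Definition lin_indep (n : nat) (k : fieldType) (s : seq {mpoly k[n]}) : Prop :=
  forall c : 'I_(size s) -> k,
    \sum_(i < size s) c i *: s`_i = 0 -> forall i, c i = 0.

Definition has_dim (n : nat) (k : fieldType) (A : {pred {mpoly k[n]}}) (r : nat)
  : Prop :=
  (exists s : seq {mpoly k[n]}, [/\ size s = r, all (mem A) s & lin_indep s]) /\
  (forall s : seq {mpoly k[n]}, all (mem A) s -> lin_indep s -> (size s <= r)%N).

(* Main.v *)
Require Import Defs.
From mathcomp Require Import all_boot all_order all_algebra.
From mathcomp Require Import multinomials.mpoly.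
Import GRing.Theory.
Local Open Scope ring_scope.

Section Helpers.
Variables (k : fieldType) (n : nat) (P : nmodType) (w : 'I_n -> P).

Lemma pdegD (m1 m2 : 'X_{1..n}) : pdeg w (m1 + m2)%MM = pdeg w m1 + pdeg w m2.
Proof.
rewrite /pdeg -big_split; apply: eq_bigr => i _; by rewrite mnmDE mulrnDr.
Qed.

Lemma pdeg1 i : pdeg w U_(i)%MM = w i.
Proof.
rewrite /pdeg (bigD1 i) //= mnm1E eqxx mulr1n big1 ?addr0 // => j /negbTE.
by rewrite mnm1E eq_sym => ->.
Qed.

Lemma phomogXM i D (f : {mpoly k[n]}) :
  phomog w D f -> phomog w (w i + D) ('X_i * f).
Proof.
move=> /allP H; apply/allP => u; rewrite mulrC (perm_mem (msuppMX _ _)).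
by move=> /mapP [m' Hm' ->]; rewrite pdegD pdeg1 (eqP (H _ Hm')).
Qed.

Lemma idealZ (I : {pred {mpoly k[n]}}) c f : is_ideal I -> f \in I -> c *: f \in I.
Proof. by move=> [_ _ HM] Hf; rewrite -mul_mpolyC; apply: HM. Qed.

Lemma ideal_sum (I : {pred {mpoly k[n]}}) (T : Type) (s : seq T) F :
  is_ideal I -> (forall x, F x \in I) -> \sum_(x <- s) F x \in I.
Proof.
move=> [H0 HD _] HF; elim: s => [|x s IH]; first by rewrite big_nil.
by rewrite big_cons; apply: HD.
Qed.

Lemma mcoeff_pcomp D (f : {mpoly k[n]}) u :
  (Defs.pcomp w D f)@_u = if pdeg w u == D then f@_u else 0.
Proof.
rewrite /Defs.pcomp raddf_sum /= big_mkcond /=.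
under eq_bigr do rewrite mcoeffZ mcoeffX.
case: (boolP (u \in msupp f)) => Hu.
  rewrite (bigD1_seq u) ?msupp_uniq //= eqxx mulr1 big1; first by rewrite Monoid.mulm1.
  by move=> m /negbTE ->; rewrite mulr0; case: ifP.
rewrite big1_seq; last first.
  move=> m /andP [_ Hm]; have -> : (m == u) = false.
    by apply/negbTE; apply: contraNneq Hu => <-.
  by rewrite mulr0; case: ifP.
by rewrite memN_msupp_eq0 //; case: ifP.
Qed.

Lemma phomog_pcomp D (f : {mpoly k[n]}) : phomog w D (Defs.pcomp w D f).
Proof.
apply/allP => u; rewrite mcoeff_msupp mcoeff_pcomp.
by case: ifP => // _; rewrite eqxx.
Qed.

Lemma pdecomp (f : {mpoly k[n]}) :
  f = \sum_(D <- undup (map (pdeg w) (msupp f))) Defs.pcomp w D f.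
Proof.
apply/mpolyP => u; rewrite raddf_sum /=.
under eq_bigr do rewrite mcoeff_pcomp.
case: (boolP (u \in msupp f)) => Hu.
  rewrite (bigD1_seq (pdeg w u)) ?undup_uniq //; last first.
    by rewrite mem_undup; apply: map_f.
  rewrite eqxx big1; first by rewrite Monoid.mulm1.
  by move=> D; rewrite eq_sym => /negbTE ->.
rewrite memN_msupp_eq0 // big1 // => D _; by case: ifP.
Qed.

Lemma lin_indep_cons (I : {pred {mpoly k[n]}}) (s : seq {mpoly k[n]}) g :
  is_ideal I -> all (mem I) s -> lin_indep s -> g \notin I -> lin_indep (g :: s).
Proof.
move=> HI Hs Hli Hg c; rewrite /= big_ord_recl /= => Hsum.
move: Hsum; under eq_bigr do rewrite add0n; move=> Hsum.
set X := \sum_(i < size s) _ in Hsum.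
have XI : X \in I.
  apply: ideal_sum => // i; apply: idealZ => //.
  exact: (all_nthP 0 Hs) i (ltn_ord i).
have c0 : c ord0 = 0.
  apply/eqP; apply/negPn/negP => nz; case/negP: Hg.
  have -> : g = (- (c ord0)^-1) *: X.
    have -> : X = - (c ord0 *: g) by apply/eqP; rewrite -addr_eq0 addrC Hsum.
    by rewrite scaleNr scalerN opprK scalerA mulVf // scale1r.
  exact: idealZ.
have Hz := Hli (fun i => c (lift ord0 i)).
move: Hsum; rewrite c0 scale0r add0r => /Hz Hz'.
case => [[|i'] Hi].
  by have -> : Ordinal Hi = ord0 by apply: val_inj.
have Hi' : (i' < size s)%N by [].
have -> : Ordinal Hi = lift ord0 (Ordinal Hi') by apply: val_inj.
exact: Hz'.
Qed.

Lemma has_dim_uniq (A : {pred {mpoly k[n]}}) r1 r2 :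
  has_dim A r1 -> has_dim A r2 -> r1 = r2.
Proof.
move=> [[s1 [sz1 a1 l1]] u1] [[s2 [sz2 a2 l2]] u2].
apply/eqP; rewrite eqn_leq -{1}sz1 -{2}sz2; apply/andP; split.
  exact: u2. exact: u1.
Qed.

End Helpers.

Theorem mainTheorem15
  (k : fieldType) (n : nat) (P : nmodType) (w : 'I_n -> P)
  (hrefine : refines_std w)
  (m : nat) (e : 'I_m -> 'I_n)
  (Q J : 'I_m -> {pred {mpoly k[n]}})
  (hQ : forall i, phomog_ideal w (Q i))
  (hJ : forall i, phomog_ideal w (J i))
  (hQJ : forall i f, f \in Q i -> f \in J i)
  (S : P -> nat)
  (h1 : forall i D, has_dim (piece w (J i) D) (S D))
  (h2 : forall i f, 'X_(e i) * f \in Q i -> f \in Q i)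
  (h3 : exists H : P -> nat, forall i D, has_dim (piece w (Q i) D) (H D))
  (h4 : forall D : P, exists (j : 'I_m) (a : 'I_m -> nat),
          let D' := D + \sum_(i < m) w (e i) *+ a i in
          has_dim (piece w (Q j) D') (S D')) :
  forall i f, (f \in Q i) = (f \in J i).
Proof.
have [H hH] := h3.
have lemA : forall l D g, g \in J l -> phomog w D g -> g \notin Q l -> (H D < S D)%N.
  move=> l D g gJ gh gQ.
  have [[s [sz sA li]] _] := hH l D.
  have [_ ub] := h1 l D.
  rewrite -sz; apply: (ub (g :: s)).
    rewrite /= inE gJ gh /=; apply: sub_all sA => x.
    by rewrite /= !inE => /andP [/hQJ -> ->].
  apply: (@lin_indep_cons k n (Q l) s g (hQ l).1 _ li gQ).
  by apply: sub_all sA => x; rewrite /= !inE => /andP [].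
have step : forall (l : 'I_m) (D : P), (H D < S D)%N -> (H (D + w (e l))%R < S (D + w (e l))%R)%N.
  move=> l D HD; rewrite ltnNge; apply/negP => Hle.
  have [[s [sz sA li]] _] := h1 l D.
  have [_ ub] := hH l D.
  have : (size s <= H D)%N.
    apply: ub li; apply/allP => x xs.
    move: (allP sA x xs); rewrite /= !inE => /andP [xJ xh].
    rewrite xh andbT; apply: (h2 l); apply/negPn/negP => xQ.
    have xJ' : 'X_(e l) * x \in J l by have [[_ _ HM] _] := hJ l; apply: HM.
    have := lemA l _ _ xJ' (@phomogXM k n P w (e l) D x xh) xQ.
    by rewrite addrC ltnNge Hle.
  by rewrite sz leqNgt HD.
have stepN : forall (l : 'I_m) (N : nat) (D : P), (H D < S D)%N ->
    (H (D + w (e l) *+ N)%R < S (D + w (e l) *+ N)%R)%N.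
  move=> l; elim => [|N IH] D HD; first by rewrite mulr0n addr0.
  by rewrite mulrSr addrA; apply: step; apply: IH.
have bad : forall (r : seq 'I_m) a D, (H D < S D)%N ->
    (H (D + \sum_(x <- r) w (e x) *+ a x)%R < S (D + \sum_(x <- r) w (e x) *+ a x)%R)%N.
  move=> r a; elim: r => [|x r IH] D HD; first by rewrite big_nil addr0.
  by rewrite big_cons addrA; apply: IH; apply: stepN.
have hhom : forall l D g, g \in J l -> phomog w D g -> g \in Q l.
  move=> l D g gJ gh; apply/negPn/negP => gQ.
  have [j [a hj]] := h4 D.
  have := bad (index_enum 'I_m) a D (lemA l D g gJ gh gQ).
  by rewrite (@has_dim_uniq k n _ _ _ (hH j _) hj) ltnn.
move=> i f; apply/idP/idP; first exact: hQJ.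
move=> fJ; rewrite (@pdecomp k n P w f); apply: ideal_sum; first exact: (hQ i).1.
move=> D; apply: (hhom i D); last exact: phomog_pcomp.
exact: (hJ i).2.
Qed.
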